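(* Let $n \in \mathbb{N}$ with $n \geq 7$ and let $\delta_1, \dots, \delta_{2^n} \in [-1,1]$ satisfy $\delta_1 + \delta_2 + \cdots + \delta_{2^n} \leq 1$. Then there exists an interval $I$ in $\mathbb{N}$ such that $I \subset [1, 2^n]$, $|I| \geq n$, and $$\max_{\min I \leq k \leq \max I} \ \sum_{j=k}^{\max I} \delta_j \leq 1.$$
   Context: An interval in $\mathbb{N}$ is a set of the form $[m,n] \cap \mathbb{N}$ with $m,n \in \mathbb{N}$, $m \le n$; $|I|$ denotes its cardinality. *)

(* Defs.v *)
From mathcomp Require Import all_boot all_order all_algebra.
Set Implicit Arguments. Unset Strict Implicit. Unset Printing Implicit Defensive.

(* Main.v *)
Require Import Defs.
From mathcomp Require Import all_boot all_order all_algebra.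
From mathcomp Require Import zify lra.
From Stdlib Require Import Classical.
Import Order.TTheory GRing.Theory Num.Theory.
Local Open Scope ring_scope.

Lemma pow_big (k : nat) : ((k + 7) * (k + 8) <= 2 ^ (k + 7))%N.
Proof.
elim: k => [//|k IH]; rewrite addSn expnS; nia.
Qed.

Lemma suffix_eq (R : realFieldType) (delta : nat -> R) (k p : nat) :
  (1 <= k)%N -> (k <= p.+1)%N ->
  \sum_(k <= j < p.+1) delta j =
  \sum_(1 <= j < p.+1) delta j - \sum_(1 <= j < k.-1.+1) delta j.
Proof.
by move=> h1 h2; rewrite [X in _ = X - _](big_cat_nat _ (n:=k)) //= prednK // addrAC subrr add0r.
Qed.

Lemma lowb (R : realFieldType) (N : nat) (delta : nat -> R) :
  (forall j, (1 <= j <= N)%N -> -1 <= delta j <= 1) ->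
  forall p, (p <= N)%N -> - p%:R <= \sum_(1 <= j < p.+1) delta j.
Proof.
move=> hd; elim=> [|p IH] hp; first by rewrite big_geq // oppr0.
rewrite big_nat_recr //= -natr1.
have := hd p.+1; rewrite hp /= => /(_ isT) /andP [h _].
have := IH (ltnW hp); lra.
Qed.

Theorem mainTheorem5 (R : realFieldType) (n : nat) (delta : nat -> R) :
  (7 <= n)%N ->
  (forall j, (1 <= j <= 2 ^ n)%N -> -1 <= delta j <= 1) ->
  \sum_(1 <= j < (2 ^ n).+1) delta j <= 1 ->
  exists m p : nat,
    [/\ (1 <= m)%N, (m <= p)%N, (p <= 2 ^ n)%N, (n <= p - m + 1)%N &
        forall k : nat, (m <= k <= p)%N -> \sum_(k <= j < p.+1) delta j <= 1].
Proof.
move=> hn hd hs.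
set N := (2 ^ n)%N.
pose S p := \sum_(1 <= j < p.+1) delta j.
have n0 : (0 < n)%N by lia.
have [good | nogood] := classic (exists p, (n <= p <= N)%N /\
   forall i, (p - n <= i < p)%N -> S p <= S i + 1).
  case: good => p [/andP [hp1 hp2] hg].
  exists (p.+1 - n)%N, p; split; try lia.
  move=> k /andP [hk1 hk2].
  rewrite suffix_eq; [|lia|lia].
  have := hg k.-1; rewrite /S => h; have := h ltac:(lia); lra.
exfalso.
have claim : forall p, (p <= N)%N -> (p %/ n)%:R - n%:R < S p.
  elim/ltn_ind => p IH hp.
  case: (ltnP p n) => hpn.
    rewrite divn_small // /S.
    have := @lowb R N delta hd p hp; have : (p%:R < n%:R :> R) by rewrite ltr_nat.
    lra.
  have [i hi] : exists i, ~ ((p - n <= i < p)%N -> S p <= S i + 1).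
    apply: not_all_ex_not => H; apply: nogood; exists p; split => //; lia.
  have [hi1 hi2] := imply_to_and _ _ hi.
  have hlt : S i + 1 < S p by rewrite ltNge; apply/negP.
  have := IH i ltac:(lia) ltac:(lia).
  have : (p %/ n <= i %/ n + 1)%N.
    apply: (@leq_trans ((i + n) %/ n)); first by apply: leq_div2r; lia.
    by rewrite divnDr // divnn n0.
  rewrite -(ler_nat R) natrD.
  lra.
have := claim N (leqnn N).
have : (n.+1 <= N %/ n)%N.
  rewrite leq_divRL //.
  have h := pow_big (n - 7).
  have e1 : (n - 7 + 7 = n)%N by lia.
  have e2 : (n - 7 + 8 = n.+1)%N by lia.
  rewrite e1 e2 in h; rewrite mulnC; exact: h.
rewrite -(ler_nat R) -natr1.
rewrite /S in hs * => hN.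
have : (0 <= n%:R :> R) by [].
lra.
Qed.
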